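(* Let $\mu\ge 2$ be an integer. For a prime $p$ and integer $r\ge 1$ set $$\mathrm{weight}(p,r)=\log_2 I_{1/p}(r-1,\mu)-\log_2 I_{1/p}(r,\mu),\qquad \mathrm{density}(p,r)=\frac{\log_2 p}{\mathrm{weight}(p,r)}.$$ Then for every fixed prime $p$, $\mathrm{density}(p,r)$ is decreasing in $r\ge 1$, and $\mathrm{density}(p,1)=\dfrac{\ln p}{-\ln\big(1-(1-1/p)^\mu\big)}$ is non-increasing as a function of the prime $p$.
   Context: For $\epsilon\in(0,1)$ and integers $k\ge 0$, $\mu\ge 1$, the regularized (incomplete) beta function is $I_\epsilon(k,\mu)=(1-\epsilon)^\mu\sum_{j=k}^{\infty}\binom{\mu+j-1}{j}\epsilon^j$; in particular $I_\epsilon(0,\mu)=1$ and $I_\epsilon(1,\mu)=1-(1-\epsilon)^\mu$. *)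

(* Defs.v *)
From Stdlib Require Import Reals ZArith Znumtheory.
From Coquelicot Require Import Coquelicot.
Open Scope R_scope.

Definition log2 (x : R) : R := ln x / ln 2.

Definition Ibeta (eps : R) (k mu : nat) : R :=
  (1 - eps) ^ mu *
  Series (fun j : nat =>
            if (k <=? j)%nat then Binomial.C (mu + j - 1) j * eps ^ j else 0).

Definition weight (mu p r : nat) : R :=
  log2 (Ibeta (/ INR p) (r - 1) mu) - log2 (Ibeta (/ INR p) r mu).

Definition density (mu p r : nat) : R := log2 (INR p) / weight mu p r.

Definition is_prime (p : nat) : Prop := prime (Z.of_nat p).

(* Main.v *)
Require Import Defs.
From Stdlib Require Import Reals ZArith Znumtheory Lia Lra.
From Coquelicot Require Import Coquelicot.
Open Scope R_scope.

Definition aa (m : nat) (e : R) (j : nat) : R := Binomial.C (m + j) j * e ^ j.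
Definition UU (m : nat) (e : R) (k : nat) : R := Series (fun j => aa m e (k + j)).

Lemma C_pos n k : (k <= n)%nat -> 0 < Binomial.C n k.
Proof.
  intros _. unfold Binomial.C.
  apply Rdiv_lt_0_compat; [apply lt_0_INR, lt_O_fact|].
  apply Rmult_lt_0_compat; apply lt_0_INR, lt_O_fact.
Qed.

Lemma C_n0 n : Binomial.C n 0 = 1.
Proof. unfold Binomial.C. rewrite Nat.sub_0_r. simpl fact. simpl INR.
  field. apply INR_fact_neq_0. Qed.

Lemma C_SS n k : (k <= n)%nat ->
  Binomial.C (S n) (S k) = Binomial.C n k * INR (S n) / INR (S k).
Proof.
  intros H. unfold Binomial.C.
  replace (S n - S k)%nat with (n - k)%nat by lia.
  change (fact (S n)) with (S n * fact n)%nat.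
  change (fact (S k)) with (S k * fact k)%nat.
  rewrite !mult_INR. field.
  repeat split; try apply INR_fact_neq_0; apply not_0_INR; lia.
Qed.

Lemma hockey m n :
  sum_f_R0 (fun k => Binomial.C (m + k) k) n = Binomial.C (S m + n) n.
Proof.
  induction n as [|n IH].
  - simpl. rewrite Nat.add_0_r, !C_n0. reflexivity.
  - simpl sum_f_R0. rewrite IH.
    replace (m + S n)%nat with (S m + n)%nat by lia.
    rewrite pascal by lia.
    replace (S m + S n)%nat with (S (S m + n)) by lia. reflexivity.
Qed.

Lemma aa_nonneg m e j : 0 <= e -> 0 <= aa m e j.
Proof.
  intros He. unfold aa. apply Rmult_le_pos.
  - left; apply C_pos; lia.
  - apply pow_le; exact He.
Qed.

Lemma aa_pos m e j : 0 < e -> 0 < aa m e j.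
Proof.
  intros He. unfold aa. apply Rmult_lt_0_compat.
  - apply C_pos; lia.
  - apply pow_lt; exact He.
Qed.

Lemma aa_S m e j : aa m e (S j) = aa m e j * e * INR (m + S j) / INR (S j).
Proof.
  unfold aa. replace (m + S j)%nat with (S (m + j)) by lia.
  rewrite C_SS by lia. simpl pow. field. apply not_0_INR; lia.
Qed.

Lemma nb_series m e : 0 <= e < 1 -> is_series (aa m e) (/ (1 - e) ^ (S m)).
Proof.
  intros He. induction m as [|m IH].
  - replace (/ (1 - e) ^ 1) with (/ (1 - e)) by (simpl; rewrite Rmult_1_r; reflexivity).
    eapply is_series_ext; [|apply is_series_geom; rewrite Rabs_pos_eq; lra].
    intros n. unfold aa. simpl. unfold Binomial.C. rewrite Nat.sub_diag.
    simpl (fact 0). simpl INR. field. apply INR_fact_neq_0.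
  - assert (Hg := is_series_geom e ltac:(rewrite Rabs_pos_eq; lra)).
    assert (Hm := is_series_mult_pos _ _ _ _ IH Hg
      (fun n => aa_nonneg m e n (proj1 He)) (fun n => pow_le _ n (proj1 He))).
    replace (/ (1 - e) ^ S (S m)) with (/ (1 - e) ^ S m * / (1 - e)).
    2:{ simpl. field. split; [|lra]. apply pow_nonzero. lra. }
    eapply is_series_ext; [|exact Hm].
    intros n. simpl.
    rewrite (sum_eq _ (fun k => Binomial.C (m + k) k * e ^ n)).
    2:{ intros i Hi. unfold aa. rewrite Rmult_assoc, <- pow_add.
        replace (i + (n - i))%nat with n by lia. reflexivity. }
    rewrite <- scal_sum, hockey. unfold aa. ring.
Qed.

Lemma Series_zero : Series (fun _ => 0) = 0.
Proof.
  rewrite <- (Series_ext (fun n => 0 * 0)) by (intros; ring).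
  rewrite Series_scal_l. ring.
Qed.

Lemma Series_nonneg f : (forall n, 0 <= f n) -> ex_series f -> 0 <= Series f.
Proof.
  intros H E. rewrite <- Series_zero. apply Series_le; auto.
  intros n; split; [lra|auto].
Qed.
Section S.
Variables (m : nat) (e : R).
Hypothesis He : 0 < e < 1.

Lemma ex_aa : ex_series (aa m e).
Proof. exists (/ (1 - e) ^ S m). apply nb_series. lra. Qed.

Lemma ex_shift k : ex_series (fun j => aa m e (k + j)).
Proof. apply (ex_series_incr_n (aa m e) k). exact ex_aa. Qed.

Lemma UU_step k : UU m e k = aa m e k + UU m e (S k).
Proof.
  unfold UU. rewrite Series_incr_1 by apply ex_shift.
  rewrite Nat.add_0_r. f_equal. apply Series_ext. intros n. f_equal. lia.
Qed.

Lemma UU_nonneg k : 0 <= UU m e k.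
Proof. apply Series_nonneg; [intros; apply aa_nonneg; lra|apply ex_shift]. Qed.

Lemma UU_pos k : 0 < UU m e k.
Proof. rewrite UU_step. pose proof (aa_pos m e k (proj1 He)). pose proof (UU_nonneg (S k)). lra. Qed.

Lemma UU_0 : UU m e 0 = / (1 - e) ^ S m.
Proof. unfold UU. simpl. apply is_series_unique, nb_series. lra. Qed.

Lemma aa_0 : aa m e 0 = 1.
Proof. unfold aa. rewrite Nat.add_0_r, C_n0. simpl. ring. Qed.

Lemma key q : (1 <= m)%nat -> aa m e q * UU m e (S (S q)) < aa m e (S q) * UU m e (S q).
Proof.
  intros Hm. unfold UU. rewrite <- !Series_scal_l.
  apply Rminus_gt_0_lt. rewrite <- Series_minus.
  2,3: apply (ex_series_scal_l _ (fun j => aa m e _)), ex_shift.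
  set (f := fun n => _).
  assert (Hf : forall n, 0 < f n).
  { intros n. unfold f.
    replace (S (S q) + n)%nat with (S (S q + n)) by lia.
    rewrite (aa_S m e (S q + n)), (aa_S m e q).
    pose proof (aa_pos m e q (proj1 He)). pose proof (aa_pos m e (S q + n) (proj1 He)).
    set (A := aa m e q) in *. set (B := aa m e (S q + n)) in *.
    assert (H1 : 0 < INR (S q)) by (apply lt_0_INR; lia).
    assert (H2 : 0 < INR (S (S q + n))) by (apply lt_0_INR; lia).
    assert (E : INR (m + S q) * INR (S (S q + n)) - INR (m + S (S q + n)) * INR (S q) = INR (m * S n)).
    { rewrite <- !mult_INR. rewrite <- minus_INR by nia. f_equal. nia. }
    assert (H3 : 0 < INR (m * S n)) by (apply lt_0_INR; nia).
    replace (A * e * INR (m + S q) / INR (S q) * B - A * (B * e * INR (m + S (S q + n)) / INR (S (S q + n))))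
      with (A * B * e * (INR (m + S q) * INR (S (S q + n)) - INR (m + S (S q + n)) * INR (S q)) / (INR (S q) * INR (S (S q + n))))
      by (field; lra).
    rewrite E. apply Rdiv_lt_0_compat; [|apply Rmult_lt_0_compat; assumption].
    apply Rmult_lt_0_compat; [|exact H3]. apply Rmult_lt_0_compat; [|lra]. apply Rmult_lt_0_compat; assumption. }
  rewrite Series_incr_1.
  - pose proof (Hf 0%nat). assert (0 <= Series (fun k => f (S k))).
    { apply Series_nonneg. intros; left; apply Hf.
      apply (ex_series_incr_1 f). unfold f.
      apply (ex_series_minus (fun n => aa m e (S q) * aa m e (S q + n)) (fun n => aa m e q * aa m e (S (S q) + n)));
        apply (ex_series_scal_l _ (fun j => aa m e _)), ex_shift. }
    lra.
  - unfold f.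
    apply (ex_series_minus (fun n => aa m e (S q) * aa m e (S q + n)) (fun n => aa m e q * aa m e (S (S q) + n)));
      apply (ex_series_scal_l _ (fun j => aa m e _)), ex_shift.
Qed.

Lemma logconc q : (1 <= m)%nat -> UU m e q * UU m e (S (S q)) < UU m e (S q) * UU m e (S q).
Proof.
  intros Hm. pose proof (key q Hm).
  rewrite (UU_step q). rewrite (UU_step (S q)) at 3.
  rewrite (UU_step (S q)) in H. rewrite (UU_step (S q)).
  nra.
Qed.

End S.

Lemma Ibeta_UU e k mu : (1 <= mu)%nat -> Ibeta e k mu = (1 - e) ^ mu * UU (mu - 1) e k.
Proof.
  intros Hmu. unfold Ibeta, UU. f_equal.
  rewrite (Series_incr_n_aux _ k).
  - apply Series_ext. intros n.
    replace (k <=? k + n)%nat with true by (symmetry; apply Nat.leb_le; lia).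
    unfold aa. f_equal. f_equal. lia.
  - intros j Hj. replace (k <=? j)%nat with false by (symmetry; apply Nat.leb_gt; lia). reflexivity.
Qed.
Definition phi (m : nat) (w : R) : R := w ^ m * (1 - w) / (1 - w ^ S m).

Lemma phi_pos m w : 0 < w < 1 -> 0 < phi m w.
Proof.
  intros Hw. unfold phi.
  assert (0 <= w ^ S m < 1) by (apply pow_lt_1_compat; lra || lia).
  apply Rdiv_lt_0_compat; [|lra]. apply Rmult_lt_0_compat; [apply pow_lt|]; lra.
Qed.

Lemma phi_inv m w : 0 < w < 1 -> phi m w * sum_f_R0 (fun n => (/ w) ^ n) m = 1.
Proof.
  intros Hw.
  assert (G := GP_finite (/ w) m).
  rewrite pow_inv, Nat.add_1_r in G. simpl pow in G.
  assert (HW : 0 < w ^ m) by (apply pow_lt; lra).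
  assert (0 <= w ^ S m < 1) by (apply pow_lt_1_compat; lra || lia).
  simpl pow in H.
  set (S0 := sum_f_R0 _ m) in *. set (W := w ^ m) in *.
  assert (E : S0 = (/ (w * W) - 1) / (/ w - 1)).
  { rewrite <- G. field. split; [|lra]. intro h. 
    assert (w * (/ w - 1) = 0) by (rewrite h; ring).
    replace (w * (/ w - 1)) with (1 - w) in H0 by (field; lra). lra. }
  rewrite E. unfold phi. simpl pow. fold W. field.
  repeat split; try lra.
Qed.

Lemma phi_mono m w1 w2 : (1 <= m)%nat -> 0 <= w1 <= w2 -> w2 < 1 -> phi m w1 <= phi m w2.
Proof.
  intros Hm Hw H2.
  destruct (Req_dec w1 0) as [->|Hn].
  - destruct (Req_dec w2 0) as [->|Hn2]; [right; reflexivity|].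
    unfold phi at 1. rewrite pow_i by lia.
    left. replace (0 * (1 - 0) / (1 - 0 ^ S m)) with 0 by (simpl; field).
    apply phi_pos; lra.
  - assert (P1 := phi_inv m w1 ltac:(lra)). assert (P2 := phi_inv m w2 ltac:(lra)).
    assert (Q1 := phi_pos m w1 ltac:(lra)). assert (Q2 := phi_pos m w2 ltac:(lra)).
    set (S1 := sum_f_R0 (fun n => (/ w1) ^ n) m) in *. set (S2 := sum_f_R0 (fun n => (/ w2) ^ n) m) in *.
    assert (S2 <= S1).
    { unfold S1, S2. apply sum_Rle. intros n _. apply pow_incr. split.
      - left; apply Rinv_0_lt_compat; lra.
      - apply Rinv_le_contravar; lra. }
    assert (0 < S2) by (apply (Rmult_lt_reg_l (phi m w2)); [lra|]; rewrite Rmult_0_r; lra).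
    replace (phi m w1) with (/ S1) by (apply (Rmult_eq_reg_r S1); [rewrite P1, Rinv_l; lra|lra]).
    replace (phi m w2) with (/ S2) by (apply (Rmult_eq_reg_r S2); [rewrite P2, Rinv_l; lra|lra]).
    apply Rinv_le_contravar; lra.
Qed.

Definition hh (m : nat) (y : R) : R := - ln (1 - (1 - exp (- y)) ^ S m).
Definition hd (m : nat) (y : R) : R := INR (S m) * phi m (1 - exp (- y)).

Lemma w_bounds y : 0 <= y -> 0 <= 1 - exp (- y) < 1.
Proof.
  intros Hy. pose proof (exp_pos (- y)).
  destruct (Req_dec y 0) as [->|Hn].
  - rewrite Ropp_0, exp_0. lra.
  - assert (exp (- y) < exp 0) by (apply exp_increasing; lra). rewrite exp_0 in H0. lra.
Qed.

Lemma w_mono a b : a <= b -> 1 - exp (- a) <= 1 - exp (- b).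
Proof.
  intros H. destruct (Req_dec a b) as [->|Hn]; [lra|].
  assert (exp (- b) < exp (- a)) by (apply exp_increasing; lra). lra.
Qed.

Lemma hd_mono m a b : (1 <= m)%nat -> 0 <= a <= b -> hd m a <= hd m b.
Proof.
  intros Hm H. unfold hd. apply Rmult_le_compat_l; [apply pos_INR|].
  apply phi_mono; auto.
  - split; [apply w_bounds; lra|apply w_mono; lra].
  - apply w_bounds; lra.
Qed.

Lemma hh_deriv m y : 0 <= y -> derivable_pt_lim (hh m) y (hd m y).
Proof.
  intros Hy. apply is_derive_Reals. unfold hh, hd, phi.
  assert (W := w_bounds y Hy).
  assert (0 <= (1 - exp (- y)) ^ S m < 1) by (apply pow_lt_1_compat; lra || lia).
  simpl pow in H.
  auto_derive; replace (1 + - exp (- y)) with (1 - exp (- y)) by ring.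
  - lra.
  - replace (match m with 0%nat => 1 | S _ => INR m + 1 end) with (INR (S m)) by reflexivity.
    simpl pow. field. lra.
Qed.

Lemma hh_0 m : hh m 0 = 0.
Proof. unfold hh. rewrite Ropp_0, exp_0. replace (1 - (1 - 1) ^ S m) with 1 by (simpl; ring). rewrite ln_1. ring. Qed.

Lemma hh_pos m y : 0 < y -> 0 < hh m y.
Proof.
  intros Hy. unfold hh. pose proof (exp_pos (- y)).
  assert (exp (- y) < exp 0) by (apply exp_increasing; lra). rewrite exp_0 in H0.
  assert (0 < (1 - exp (- y)) ^ S m) by (apply pow_lt; lra).
  assert (0 <= (1 - exp (- y)) ^ S m < 1) by (apply pow_lt_1_compat; lra || lia).
  assert (ln (1 - (1 - exp (- y)) ^ S m) < ln 1) by (apply ln_increasing; lra).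
  rewrite ln_1 in H3. lra.
Qed.

Lemma hh_ratio m y1 y2 : (1 <= m)%nat -> 0 < y1 <= y2 -> hh m y1 * y2 <= hh m y2 * y1.
Proof.
  intros Hm Hy. destruct (Req_dec y1 y2) as [->|Hn]; [lra|].
  destruct (MVT_cor2 (hh m) (hd m) 0 y1 ltac:(lra) (fun c Hc => hh_deriv m c ltac:(lra))) as [c1 [E1 C1]].
  destruct (MVT_cor2 (hh m) (hd m) y1 y2 ltac:(lra) (fun c Hc => hh_deriv m c ltac:(lra))) as [c2 [E2 C2]].
  rewrite hh_0 in E1.
  assert (hd m c1 <= hd m y1) by (apply hd_mono; [exact Hm|lra]).
  assert (hd m y1 <= hd m c2) by (apply hd_mono; [exact Hm|lra]).
  assert (A1 : (hd m c2 - hd m y1) * ((y2 - y1) * y1) >= 0) by (apply Rle_ge, Rmult_le_pos; nra).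
  assert (A2 : (hd m y1 - hd m c1) * (y1 * (y2 - y1)) >= 0) by (apply Rle_ge, Rmult_le_pos; nra).
  nra.
Qed.

Lemma prime_INR p : is_prime p -> 2 <= INR p.
Proof.
  intros Hp. apply prime_ge_2 in Hp. assert (H : (2 <= p)%nat) by lia.
  apply le_INR in H. simpl in H. lra.
Qed.

Lemma ln_pos_INR p : is_prime p -> 0 < ln (INR p).
Proof.
  intros Hp. pose proof (prime_INR p Hp). rewrite <- ln_1. apply ln_increasing; lra.
Qed.

Lemma eps_bounds p : is_prime p -> 0 < / INR p < 1.
Proof.
  intros Hp. pose proof (prime_INR p Hp). split.
  - apply Rinv_0_lt_compat; lra.
  - rewrite <- Rinv_1. apply Rinv_lt_contravar; lra.
Qed.

Lemma ln2_pos : 0 < ln 2.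
Proof. rewrite <- ln_1. apply ln_increasing; lra. Qed.

Lemma density1 mu p : (2 <= mu)%nat -> is_prime p ->
  density mu p 1 = ln (INR p) / - ln (1 - (1 - / INR p) ^ mu).
Proof.
  intros Hmu Hp. pose proof (eps_bounds p Hp) as He.
  pose proof ln2_pos. pose proof (ln_pos_INR p Hp).
  unfold density, weight. simpl (1 - 1)%nat. set (e := / INR p) in *.
  rewrite !Ibeta_UU by lia.
  assert (HS : S (mu - 1) = mu) by lia.
  assert (U0 := UU_0 (mu - 1) e He). rewrite HS in U0.
  assert (St := UU_step (mu - 1) e He 0). rewrite aa_0, U0 in St.
  set (c := (1 - e) ^ mu) in *.
  assert (Hc : 0 < c < 1).
  { unfold c. split; [apply pow_lt; lra|]. 
    assert (0 <= (1 - e) ^ mu < 1) by (apply pow_lt_1_compat; lra || lia). lra. }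
  rewrite U0. replace (c * / c) with 1 by (field; lra).
  assert (U1 : UU (mu - 1) e 1 = / c - 1) by lra. rewrite U1. replace (c * (/ c - 1)) with (1 - c) by (field; lra).
  assert (ln (1 - c) < 0) by (rewrite <- ln_1; apply ln_increasing; lra).
  unfold log2. rewrite ln_1. field. lra.
Qed.

Theorem mainTheorem10 (mu : nat) (Hmu : (2 <= mu)%nat) :
  (forall p : nat, is_prime p ->
     forall r : nat, (1 <= r)%nat -> density mu p (S r) < density mu p r)
  /\ (forall p : nat, is_prime p ->
        density mu p 1 = ln (INR p) / - ln (1 - (1 - / INR p) ^ mu))
  /\ (forall p q : nat, is_prime p -> is_prime q -> (p <= q)%nat ->
        density mu q 1 <= density mu p 1).
Proof.
  split; [|split].
  - intros p Hp r Hr. destruct r as [|q]; [lia|].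
    pose proof (eps_bounds p Hp) as He.
    pose proof ln2_pos. pose proof (ln_pos_INR p Hp).
    unfold density, weight. set (e := / INR p) in *.
    replace (S (S q) - 1)%nat with (S q) by lia.
    replace (S q - 1)%nat with q by lia.
    rewrite !Ibeta_UU by lia.
    assert (Hc : 0 < (1 - e) ^ mu) by (apply pow_lt; lra).
    pose proof (UU_pos (mu - 1) e He q) as P0.
    pose proof (UU_pos (mu - 1) e He (S q)) as P1.
    pose proof (UU_pos (mu - 1) e He (S (S q))) as P2.
    pose proof (logconc (mu - 1) e He q ltac:(lia)) as LC.
    assert (D1 : UU (mu - 1) e (S q) < UU (mu - 1) e q).
    { rewrite (UU_step (mu - 1) e He q). pose proof (aa_pos (mu - 1) e q (proj1 He)). lra. }
    set (c := (1 - e) ^ mu) in *.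
    set (U0 := UU (mu - 1) e q) in *. set (U1 := UU (mu - 1) e (S q)) in *.
    set (U2 := UU (mu - 1) e (S (S q))) in *.
    unfold log2. rewrite !ln_mult by lra.
    assert (L1 : ln U1 < ln U0) by (apply ln_increasing; lra).
    assert (L2 : ln (U0 * U2) < ln (U1 * U1)) by (apply ln_increasing; [nra|lra]).
    rewrite !ln_mult in L2 by lra.
    set (L := ln (INR p)) in *.
    replace (L / ln 2 / ((ln c + ln U1) / ln 2 - (ln c + ln U2) / ln 2))
      with (L * / (ln U1 - ln U2)) by (field; lra).
    replace (L / ln 2 / ((ln c + ln U0) / ln 2 - (ln c + ln U1) / ln 2))
      with (L * / (ln U0 - ln U1)) by (field; lra).
    apply Rmult_lt_compat_l; [lra|]. apply Rinv_lt_contravar; nra.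
  - intros p Hp. apply density1; assumption.
  - intros p q Hp Hq Hpq.
    rewrite !density1 by assumption.
    assert (Hm : (1 <= mu - 1)%nat) by lia.
    assert (E : forall x, is_prime x ->
      - ln (1 - (1 - / INR x) ^ mu) = hh (mu - 1) (ln (INR x))).
    { intros x Hx. pose proof (prime_INR x Hx). unfold hh.
      rewrite exp_Ropp, exp_ln by lra. replace (S (mu - 1)) with mu by lia. reflexivity. }
    rewrite !E by assumption.
    pose proof (ln_pos_INR p Hp). pose proof (ln_pos_INR q Hq).
    assert (Hl : ln (INR p) <= ln (INR q)).
    { destruct (Nat.eq_dec p q) as [->|Hn]; [lra|].
      left. apply ln_increasing; [pose proof (prime_INR p Hp); lra|]. apply lt_INR. lia. }
    pose proof (hh_ratio (mu - 1) (ln (INR p)) (ln (INR q)) Hm ltac:(lra)) as HR.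
    pose proof (hh_pos (mu - 1) (ln (INR p)) ltac:(lra)).
    pose proof (hh_pos (mu - 1) (ln (INR q)) ltac:(lra)).
    set (y1 := ln (INR p)) in *. set (y2 := ln (INR q)) in *.
    set (h1 := hh (mu - 1) y1) in *. set (h2 := hh (mu - 1) y2) in *.
    replace (y2 / h2) with ((y2 * h1) * / (h1 * h2)) by (field; lra).
    replace (y1 / h1) with ((y1 * h2) * / (h1 * h2)) by (field; lra).
    apply Rmult_le_compat_r; [left; apply Rinv_0_lt_compat; nra|lra].
Qed.
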